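(* Let $G$ be a group, $n$ a positive integer, and let $\alpha_i:H_i\to H_i'$ for $i=1,\dots,r$ be isomorphisms between finite-index subgroups of $G$ such that the subindices of $H_i$ and of $H_i'$ in $G$ are at most $n$ for all $i$. Then every finite product of the classes $[\alpha_i]$ (and their inverses) in $\mathrm{Comm}(G)$ can be represented by an isomorphism $\beta:H\to H'$ where $H,H'$ are finite-index subgroups of $G$ whose subindices in $G$ are at most $n$.
   Context: For a finite-index subgroup $H\leqslant G$, the subindex of $H$ in $G$ is the minimal $n$ such that there is a chain of subgroups $H=G_0\leqslant G_1\leqslant\cdots\leqslant G_k=G$ with $[G_i:G_{i-1}]\le n$ for all $i$. The abstract commensurator $\mathrm{Comm}(G)$ is the group of equivalence classes $[\varphi]$ of isomorphisms between finite-index subgroups of $G$, two being equivalent if they agree on some finite-index subgroup on which both are defined; the product of $\alpha:G_1\to G_1'$ and $\beta:G_2\to G_2'$ is $\alpha\beta:\alpha^{-1}(G_1'\cap G_2)\to\beta(G_1'\cap G_2)$, and the inverse of $[\alpha]$ is $[\alpha^{-1}]$. *)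

(* Defs.v *)
From Stdlib Require Import List Arith.
Import ListNotations.

Record group := Group {
  carrier :> Type;
  mul : carrier -> carrier -> carrier;
  one : carrier;
  inv : carrier -> carrier;
  mulA : forall x y z, mul x (mul y z) = mul (mul x y) z;
  mul1g : forall x, mul one x = x;
  mulVg : forall x, mul (inv x) x = one
}.

Section Defs.
Variable G : group.

Definition subgroup (H : G -> Prop) : Prop :=
  H (one G) /\ (forall x y, H x -> H y -> H (mul G x y)) /\
  (forall x, H x -> H (inv G x)).

(* [K : H] <= n  (for H <= K): K is covered by at most n left cosets x H, x in K *)
Definition index_le (H K : G -> Prop) (n : nat) : Prop :=
  exists l : list G, length l <= n /\ (forall x, In x l -> K x) /\
    (forall y, K y -> exists x, In x l /\ H (mul G (inv G x) y)).

Definition finite_index (H : G -> Prop) : Prop :=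
  subgroup H /\ exists n, index_le H (fun _ => True) n.

Definition subindex_le (H : G -> Prop) (n : nat) : Prop :=
  exists (k : nat) (Gs : nat -> G -> Prop),
    Gs 0 = H /\ (forall x, Gs k x) /\
    (forall i, i <= k -> subgroup (Gs i)) /\
    (forall i, i < k -> (forall x, Gs i x -> Gs (S i) x) /\
                        index_le (Gs i) (Gs (S i)) n).

Record piso := PIso {
  pdom : G -> Prop;
  pcod : G -> Prop;
  pfun : G -> G;
  pinv : G -> G
}.

Definition is_iso (a : piso) : Prop :=
  subgroup (pdom a) /\ subgroup (pcod a) /\
  (forall x, pdom a x -> pcod a (pfun a x)) /\
  (forall y, pcod a y -> pdom a (pinv a y)) /\
  (forall x, pdom a x -> pinv a (pfun a x) = x) /\
  (forall y, pcod a y -> pfun a (pinv a y) = y) /\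
  (forall x y, pdom a x -> pdom a y ->
     pfun a (mul G x y) = mul G (pfun a x) (pfun a y)).

(* isomorphism between finite-index subgroups: represents an element of Comm(G) *)
Definition comm_rep (a : piso) : Prop :=
  is_iso a /\ finite_index (pdom a) /\ finite_index (pcod a).

(* a letter (i, true) stands for [alpha_i], (i, false) for [alpha_i]^-1 = [alpha_i^-1] *)
Definition letter (a : piso) (b : bool) : (G -> Prop) * (G -> G) :=
  if b then (pdom a, pfun a) else (pcod a, pinv a).

(* the composite partial map of a word, following the product rule of Comm(G):
   alpha beta : alpha^-1(G1' :&: G2) -> beta(G1' :&: G2), x |-> beta (alpha x).
   The empty word is the identity of G. *)
Fixpoint word_map (alpha : nat -> piso) (w : list (nat * bool))
  : (G -> Prop) * (G -> G) :=
  match w with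
  | [] => (fun _ => True, fun x => x)
  | (i, b) :: w' =>
      let (D1, F1) := letter (alpha i) b in
      let (D2, F2) := word_map alpha w' in
      (fun x => D1 x /\ D2 (F1 x), fun x => F2 (F1 x))
  end.

(* beta represents the same class of Comm(G) as the partial map (D, F):
   they agree on some finite-index subgroup on which both are defined *)
Definition represents (beta : piso) (DF : (G -> Prop) * (G -> G)) : Prop :=
  exists K : G -> Prop, finite_index K /\
    (forall x, K x -> pdom beta x /\ fst DF x) /\
    (forall x, K x -> pfun beta x = snd DF x).

End Defs.

Arguments PIso {G}.

(* Main.v *)
Require Import Defs.
From Stdlib Require Import List Arith Lia Classical.
Import ListNotations.

Section S.
Variable G : group.
Notation m := (mul G).
Notation iv := (inv G).
Notation e := (one G).

Lemma mulgV x : m x (iv x) = e.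
Proof.
  rewrite <- (mul1g G (m x (iv x))).
  rewrite <- (mulVg G (iv x)) at 1.
  rewrite <- mulA, (mulA G (iv x) x (iv x)), mulVg, mul1g, mulVg. reflexivity.
Qed.

Lemma mulg1 x : m x e = x.
Proof. rewrite <- (mulVg G x), mulA, mulgV, mul1g. reflexivity. Qed.

Lemma inv_uniq a b : m a b = e -> b = iv a.
Proof. intro H. rewrite <- (mul1g G b), <- (mulVg G a), <- mulA, H, mulg1. reflexivity. Qed.

Lemma invK x : iv (iv x) = x.
Proof. symmetry; apply inv_uniq; apply mulVg. Qed.

Lemma invM x y : iv (m x y) = m (iv y) (iv x).
Proof.
  symmetry; apply inv_uniq.
  rewrite <- mulA, (mulA G y (iv y)), mulgV, mul1g, mulgV. reflexivity.
Qed.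

Lemma cancel_l a y z : m a y = m a z -> y = z.
Proof.
  intro H; rewrite <- (mul1g G y), <- (mulVg G a), <- mulA, H, mulA, mulVg, mul1g.
  reflexivity.
Qed.

Lemma subgroup_ext (H H' : G -> Prop) : subgroup G H -> (forall x, H x <-> H' x) -> subgroup G H'.
Proof.
  intros [H1 [Hm Hi]] E. repeat split.
  - apply E; auto.
  - intros x y Hx Hy; apply E; apply Hm; apply E; auto.
  - intros x Hx; apply E; apply Hi; apply E; auto.
Qed.

Lemma index_ext (A B A' B' : G -> Prop) k : (forall x, A x <-> A' x) -> (forall x, B x <-> B' x) ->
  index_le G A B k -> index_le G A' B' k.
Proof.
  intros EA EB [l [Hl [Hin Hc]]]. exists l. split; [auto|split].
  - intros x Hx; apply EB; auto.
  - intros y Hy. destruct (Hc y (proj2 (EB y) Hy)) as [x [Hx Ha]]. exists x; split; auto; apply EA; auto.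
Qed.

Lemma len_fm (f : G -> G -> G) (l l' : list G) :
  length (flat_map (fun y => map (f y) l) l') = length l' * length l.
Proof. induction l'; simpl; [reflexivity|rewrite length_app, length_map, IHl'; reflexivity]. Qed.

Lemma index_trans (A B C : G -> Prop) p q : (forall x, B x -> C x) ->
  (forall x y, C x -> C y -> C (m x y)) -> index_le G A B p -> index_le G B C q ->
  index_le G A C (q * p).
Proof.
  intros HBC HCm [lA [HlA [HinA HcA]]] [lC [HlC [HinC HcC]]].
  exists (flat_map (fun y => map (fun x => m y x) lA) lC). split; [|split].
  - rewrite len_fm. apply Nat.mul_le_mono; auto.
  - intros z Hz. apply in_flat_map in Hz as [y [Hy Hz]]. apply in_map_iff in Hz as [x [<- Hx]].
    apply HCm; auto.
  - intros z Hz. destruct (HcC z Hz) as [y [Hy Hyz]]. destruct (HcA _ Hyz) as [x [Hx Hxz]].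
    exists (m y x). split.
    + apply in_flat_map; exists y; split; auto. apply in_map with (f := fun x => m y x); auto.
    + rewrite invM, <- mulA; exact Hxz.
Qed.

Lemma pick_list (P : G -> G -> Prop) (l : list G) : exists l', length l' <= length l /\
  (forall z, In z l' -> exists x, In x l /\ P x z) /\
  (forall x, In x l -> (exists z, P x z) -> exists z, In z l' /\ P x z).
Proof.
  induction l as [|a l IH].
  - exists nil; simpl; repeat split; intros; try contradiction; lia.
  - destruct IH as [l' [H0 [H1 H2]]].
    destruct (classic (exists z, P a z)) as [[z Hz]|Hn].
    + exists (z :: l'). simpl; split; [lia|split].
      * intros z' [<-|H]; [exists a; auto|]. destruct (H1 z' H) as [x [? ?]]; exists x; auto.
      * intros x [<-|Hx] Hex; [exists z; auto|]. destruct (H2 x Hx Hex) as [z' [? ?]]; exists z'; auto.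
    + exists l'. simpl; split; [lia|split].
      * intros z' H. destruct (H1 z' H) as [x [? ?]]; exists x; auto.
      * intros x [<-|Hx] Hex; [contradiction|]. auto.
Qed.

Lemma index_inter (Cc A B : G -> Prop) k : subgroup G Cc -> subgroup G A -> index_le G A B k ->
  index_le G (fun x => Cc x /\ A x) (fun x => Cc x /\ B x) k.
Proof.
  intros [C1 [Cm Ci]] [A1 [Am Ai]] [l [Hl [HinB Hcov]]].
  destruct (pick_list (fun x z => (Cc z /\ B z) /\ A (m (iv x) z)) l) as [l' [Hl' [Hin' Hcov']]].
  exists l'. split; [lia|split].
  - intros z Hz; destruct (Hin' z Hz) as [x [_ [H _]]]; exact H.
  - intros y [HCy HBy]. destruct (Hcov y HBy) as [x [Hx HAx]].
    destruct (Hcov' x Hx) as [z [Hz [[HCz HBz] HAz]]].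
    { exists y; auto. }
    exists z. split; [exact Hz|split].
    + apply Cm; auto.
    + assert (E : m (iv z) y = m (iv (m (iv x) z)) (m (iv x) y)).
      { rewrite invM, invK, <- mulA, (mulA G x (iv x) y), mulgV, mul1g. reflexivity. }
      rewrite E. apply Am; auto.
Qed.

Definition pre (a : piso G) (P : G -> Prop) := fun x => pdom G a x /\ P (pfun G a x).

Lemma f_one a : is_iso G a -> pfun G a e = e.
Proof.
  intros [[HD1 [HDm HDi]] [HC [Hmap [Hmapi [Hgf [Hfg Hhom]]]]]].
  apply (cancel_l (pfun G a e)). rewrite mulg1, <- Hhom by auto. rewrite mul1g. reflexivity.
Qed.

Lemma f_inv a u : is_iso G a -> pdom G a u -> pfun G a (iv u) = iv (pfun G a u).
Proof.
  intros Ha Hu. pose proof Ha as [[HD1 [HDm HDi]] [HC [Hmap [Hmapi [Hgf [Hfg Hhom]]]]]].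
  apply inv_uniq. rewrite <- Hhom by auto. rewrite mulgV. apply f_one; auto.
Qed.

Lemma pre_subgroup a P : is_iso G a -> subgroup G P -> subgroup G (pre a P).
Proof.
  intros Ha [P1 [Pm Pi]]. pose proof Ha as [[HD1 [HDm HDi]] [HC [Hmap [Hmapi [Hgf [Hfg Hhom]]]]]].
  unfold pre. split; [|split].
  - split; auto. rewrite f_one; auto.
  - intros x y [Hx Px] [Hy Py]. split; auto. rewrite Hhom; auto.
  - intros x [Hx Px]. split; auto. rewrite f_inv; auto.
Qed.

Lemma index_pre a A B k : is_iso G a -> (forall x, B x -> pcod G a x) ->
  index_le G A B k -> index_le G (pre a A) (pre a B) k.
Proof.
  intros Ha HBC [l [Hl [Hin Hcov]]].
  pose proof Ha as [[HD1 [HDm HDi]] [HC [Hmap [Hmapi [Hgf [Hfg Hhom]]]]]].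
  exists (map (pinv G a) l). split; [rewrite length_map; auto|split].
  - intros z Hz. apply in_map_iff in Hz as [x [<- Hx]]. unfold pre.
    split; [apply Hmapi; auto|]. rewrite Hfg; auto.
  - intros y [Dy By]. destruct (Hcov _ By) as [x [Hx HA]]. exists (pinv G a x).
    split; [apply in_map; auto|]. unfold pre.
    assert (Dx : pdom G a (pinv G a x)) by auto.
    split; [auto|]. rewrite Hhom, f_inv, Hfg; auto.
Qed.

Definition flip (a : piso G) := PIso (pcod G a) (pdom G a) (pinv G a) (pfun G a).

Lemma flip_iso a : is_iso G a -> is_iso G (flip a).
Proof.
  intros [HD [HC [Hmap [Hmapi [Hgf [Hfg Hhom]]]]]].
  unfold is_iso; simpl. split; [auto|split; [auto|]].
  split; [auto|split; [auto|split; [auto|split; [auto|]]]].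
  intros x y Hx Hy.
  pose proof HD as [_ [HDm _]].
  rewrite <- (Hfg x Hx) at 1. rewrite <- (Hfg y Hy) at 1.
  rewrite <- Hhom by auto. apply Hgf; auto.
Qed.

Definition comp (a b : piso G) := PIso
  (fun x => pdom G a x /\ (pcod G a (pfun G a x) /\ pdom G b (pfun G a x)))
  (fun y => pcod G b y /\ (pdom G b (pinv G b y) /\ pcod G a (pinv G b y)))
  (fun x => pfun G b (pfun G a x)) (fun y => pinv G a (pinv G b y)).

Lemma subgroup_inter A B : subgroup G A -> subgroup G B -> subgroup G (fun x => A x /\ B x).
Proof.
  intros [A1 [Am Ai]] [B1 [Bm Bi]]. repeat split; intuition.
Qed.

Lemma comp_iso a b : is_iso G a -> is_iso G b -> is_iso G (comp a b).
Proof.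
  intros Ha Hb.
  pose proof Ha as [HDa [HCa [Hmapa [Hmapia [Hgfa [Hfga Hhoma]]]]]].
  pose proof Hb as [HDb [HCb [Hmapb [Hmapib [Hgfb [Hfgb Hhomb]]]]]].
  split; [|split].
  - apply (pre_subgroup a (fun z => pcod G a z /\ pdom G b z)); auto. apply subgroup_inter; auto.
  - apply (pre_subgroup (flip b) (fun z => pdom G b z /\ pcod G a z)); [apply flip_iso; auto|].
    apply subgroup_inter; auto.
  - simpl. split; [|split; [|split; [|split]]].
    + intros x [Hx [H1 H2]]. rewrite Hgfb; auto.
    + intros y [Hy [H1 H2]]. rewrite Hfga; auto.
    + intros x [Hx [H1 H2]]. rewrite Hgfb, Hgfa; auto.
    + intros y [Hy [H1 H2]]. rewrite Hfga, Hfgb; auto.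
    + intros x y [Hx [H1 H2]] [Hy [H3 H4]]. rewrite Hhoma, Hhomb; auto.
Qed.

Inductive sub_chain (n : nat) : (G -> Prop) -> Prop :=
| sc_top H : subgroup G H -> (forall x, H x) -> sub_chain n H
| sc_step H K : subgroup G H -> (forall x, H x -> K x) -> index_le G H K n ->
    sub_chain n K -> sub_chain n H.

Lemma sub_chain_ext n H H' : sub_chain n H -> (forall x, H x <-> H' x) -> sub_chain n H'.
Proof.
  intros Hc E. destruct Hc as [H Hs Ha|H K Hs Hsub Hi Hc].
  - apply sc_top; [eapply subgroup_ext; eauto|intro x; apply E; auto].
  - apply sc_step with K; [eapply subgroup_ext; eauto| | |].
    + intros x Hx; apply Hsub, E; auto.
    + eapply index_ext; [exact E| |exact Hi]; tauto.
    + exact Hc.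
Qed.

Lemma sub_chain_subgroup n H : sub_chain n H -> subgroup G H.
Proof. intros []; auto. Qed.

Lemma chain_pre n a B : is_iso G a -> sub_chain n (pdom G a) -> sub_chain n B ->
  sub_chain n (pre a (fun z => pcod G a z /\ B z)).
Proof.
  intros Ha HcD HcB.
  pose proof Ha as [HDa [HCa [Hmapa [Hmapia [Hgfa [Hfga Hhoma]]]]]].
  induction HcB as [H Hs Hall|H K Hs Hsub Hi Hc IH].
  - apply sub_chain_ext with (pdom G a); auto. intro x; unfold pre; split.
    + intro Hx; auto.
    + intros [Hx _]; auto.
  - apply sc_step with (pre a (fun z => pcod G a z /\ K z)).
    + apply pre_subgroup; auto. apply subgroup_inter; auto.
    + unfold pre; intros x [H1 [H2 H3]]; auto.
    + apply index_pre; auto. intros x [? ?]; auto. apply index_inter; auto.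
    + exact IH.
Qed.

Lemma chain_fi n H : sub_chain n H -> finite_index G H.
Proof.
  induction 1 as [H Hs Hall|H K Hs Hsub Hi Hc IH].
  - split; auto. exists 1, [e]. simpl. split; auto. split.
    + auto.
    + intros y _; exists e; split; auto.
  - split; auto. destruct IH as [HsK [k Hk]]. exists (k * n).
    apply index_trans with K; auto.
Qed.

Lemma chain_of_subindex n H : subindex_le G H n -> sub_chain n H.
Proof.
  intros [k [Gs [H0 [Hall [Hsg Hst]]]]]. subst H.
  assert (forall d i, i + d = k -> sub_chain n (Gs i)).
  { induction d; intros i Hi.
    - rewrite Nat.add_0_r in Hi; subst. apply sc_top; auto.
    - destruct (Hst i ltac:(lia)) as [Hs Hix].
      apply sc_step with (Gs (S i)); auto. apply Hsg; lia. apply IHd; lia. }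
  apply (H k 0); lia.
Qed.

Lemma subindex_of_chain n H : sub_chain n H -> subindex_le G H n.
Proof.
  induction 1 as [H Hs Hall|H K Hs Hsub Hi Hc IH].
  - exists 0, (fun _ => H). repeat split; auto. intros; lia.
  - destruct IH as [k [Gs [H0 [Hall [Hsg Hst]]]]].
    exists (S k), (fun i => match i with 0 => H | S j => Gs j end).
    split; [reflexivity|split; [exact Hall|split]].
    + intros [|i] Hle; auto. apply Hsg; lia.
    + intros [|i] Hlt.
      * rewrite H0; auto.
      * apply Hst; lia.
Qed.

Definition idp : piso G := PIso (fun _ => True) (fun _ => True) (fun x => x) (fun x => x).

Lemma idp_iso : is_iso G idp.
Proof.
  assert (subgroup G (fun _ => True)) by (repeat split).
  unfold is_iso; simpl; repeat split; auto.
Qed.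

Lemma main_strong n r (alpha : nat -> piso G) :
  (forall i, i < r ->
     comm_rep G (alpha i) /\
     subindex_le G (pdom G (alpha i)) n /\ subindex_le G (pcod G (alpha i)) n) ->
  forall w : list (nat * bool),
    (forall ib, In ib w -> fst ib < r) ->
    exists beta : piso G, is_iso G beta /\ sub_chain n (pdom G beta) /\ sub_chain n (pcod G beta) /\
      (forall x, pdom G beta x -> fst (word_map G alpha w) x) /\
      (forall x, pdom G beta x -> pfun G beta x = snd (word_map G alpha w) x).
Proof.
  intros Hal w. induction w as [|[i b] w IH]; intros Hw.
  - exists idp. split; [apply idp_iso|].
    assert (sub_chain n (fun _ : G => True)) by (apply sc_top; [repeat split|auto]).
    simpl; repeat split; auto.
  - destruct IH as [bt [Hbt [HcD [HcC [Hdom Hfun]]]]].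
    { intros ib Hib; apply Hw; right; auto. }
    assert (Hi : i < r) by (apply (Hw (i, b)); left; auto).
    destruct (Hal i Hi) as [[Hiso _] [HsD HsC]].
    apply chain_of_subindex in HsD, HsC.
    set (L := if b then alpha i else flip (alpha i)).
    assert (HL : is_iso G L /\ sub_chain n (pdom G L) /\ sub_chain n (pcod G L) /\
       letter G (alpha i) b = (pdom G L, pfun G L)).
    { unfold L; destruct b; simpl; auto. split; [apply flip_iso; auto|auto]. }
    destruct HL as [HLi [HLD [HLC HLe]]].
    exists (comp L bt). split; [apply comp_iso; auto|split; [|split]].
    + apply (chain_pre n L (pdom G bt)); auto.
    + apply (chain_pre n (flip bt) (pcod G L)); auto. apply flip_iso; auto.
    + simpl. rewrite HLe. destruct (word_map G alpha w) as [D2 F2] eqn:EW.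
      simpl in *. split.
      * intros x [Hx [_ H2]]; auto.
      * intros x [Hx [_ H2]]; auto.
Qed.

End S.

Theorem lemma2p5 (G : group) (n r : nat) (alpha : nat -> piso G) :
  0 < n ->
  (forall i, i < r ->
     comm_rep G (alpha i) /\
     subindex_le G (pdom G (alpha i)) n /\ subindex_le G (pcod G (alpha i)) n) ->
  forall w : list (nat * bool),
    (forall ib, In ib w -> fst ib < r) ->
    exists beta : piso G,
      comm_rep G beta /\
      subindex_le G (pdom G beta) n /\ subindex_le G (pcod G beta) n /\
      represents G beta (word_map G alpha w).
Proof.
  intros _ Hal w Hw.
  destruct (main_strong G n r alpha Hal w Hw) as [bt [Hbt [HcD [HcC [Hdom Hfun]]]]].
  exists bt. split; [split; [auto|split; eapply chain_fi; eauto]|].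
  split; [apply subindex_of_chain; auto|split; [apply subindex_of_chain; auto|]].
  exists (pdom G bt). split; [eapply chain_fi; eauto|split]; auto.
Qed.
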